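(* Let $n\ge 3$, let $q_1,\dots,q_n,r_1,\dots,r_n$ be positive integers, and let $H$ be a finite simple graph without a universal vertex. Then $${\rm dim}_s\big(K_{n,n}^{-M}(q_1,\dots,q_n,r_1,\dots,r_n)\diamond H\big)=\sum_{i=1}^{n}\Big((q_i+r_i)\sum_{j=1}^{k(H)}t_j(H)\Big)-n\,k(H).$$
   Context: The modular product $G\diamond H$ has vertex set $V(G)\times V(H)$; distinct vertices $(g,h)$ and $(g',h')$ are adjacent iff ($g=g'$ and $hh'\in E(H)$), or ($gg'\in E(G)$ and $h=h'$), or ($gg'\in E(G)$ and $hh'\in E(H)$), or ($g\neq g'$, $h\neq h'$, $gg'\notin E(G)$ and $hh'\notin E(H)$). $K_{n,n}^{-M}(q_1,\dots,q_n,r_1,\dots,r_n)$ is the graph whose vertex set is a disjoint union of sets $X_1,\dots,X_n,Y_1,\dots,Y_n$ with $|X_i|=q_i$, $|Y_i|=r_i$, where each $X_i$ and each $Y_i$ induces a clique, every vertex of $X_i$ is adjacent to every vertex of $Y_j$ whenever $i\neq j$, and there are no other edges (when all $q_i=r_i=1$ this is $K_{n,n}$ minus a perfect matching, denoted $K_{n,n}^{-M}$). A vertex is universal if its closed neighborhood is the whole vertex set. Vertices $h,h'$ are twins if $N_H[h]=N_H[h']$ (an equivalence relation). A $\gamma_H$-pair is a set $\{h,h'\}$ of two distinct vertices with $N_H[h]\cap N_H[h']=\emptyset$ and $N_H[h]\cup N_H[h']=V(H)$. Let $T_1(H),\dots,T_{k(H)}(H)$ be the following partition of $V(H)$: each twin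 class of vertices not belonging to any $\gamma_H$-pair is one part, and for each $\gamma_H$-pair $\{h,h'\}$ the union of the twin class of $h$ and the twin class of $h'$ is one part; $k(H)$ is the number of parts and $t_j(H)=|T_j(H)|$. For a connected graph $X$, a vertex $z$ strongly resolves distinct vertices $x,y$ if $d_X(y,z)=d_X(y,x)+d_X(x,z)$ or $d_X(x,z)=d_X(x,y)+d_X(y,z)$; ${\rm dim}_s(X)$ is the minimum cardinality of a set $S\subseteq V(X)$ such that every pair of distinct vertices is strongly resolved by some vertex of $S$. *)

(* Defs.v *)
From mathcomp Require Import all_boot.
Set Implicit Arguments. Unset Strict Implicit. Unset Printing Implicit Defensive.

Definition simple_graph (T : finType) (e : rel T) : Prop :=
  symmetric e /\ irreflexive e.

Definition cnbh (T : finType) (e : rel T) (x : T) : {set T} :=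
  [set y | (y == x) || e x y].

Definition universal (T : finType) (e : rel T) (x : T) : bool :=
  cnbh e x == [set: T].

Definition modprod (G H : finType) (eG : rel G) (eH : rel H) : rel (G * H) :=
  fun u v =>
    let: (g, h) := u in let: (g', h') := v in
    (u != v) &&
    [|| (g == g') && eH h h',
        eG g g' && (h == h'),
        eG g g' && eH h h'
      | [&& g != g', h != h', ~~ eG g g' & ~~ eH h h']].

(* The graph K_{n,n}^{-M}(q_1..q_n, r_1..r_n): vertex type T partitioned by a
   label lab : T -> bool * 'I_n; (false, i) is the block X_i, (true, i) is Y_i. *)
Definition KnnM_graph (n : nat) (T : finType) (lab : T -> bool * 'I_n) : rel T :=
  fun x y => (x != y) &&
    ((lab x == lab y) || (((lab x).1 != (lab y).1) && ((lab x).2 != (lab y).2))).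

Definition is_KnnM (n : nat) (q r : 'I_n -> nat) (T : finType) (e : rel T) : Prop :=
  exists lab : T -> bool * 'I_n,
    [/\ forall i, #|[set x | lab x == (false, i)]| = q i,
        forall i, #|[set x | lab x == (true, i)]| = r i
      & e =2 KnnM_graph lab].

(* Reachability within k steps, and graph distance (shortest path length);
   for unreachable pairs the distance is the sentinel #|T| (only connected
   graphs are relevant). *)
Fixpoint nreach (T : finType) (e : rel T) (k : nat) (x y : T) : bool :=
  match k with
  | 0 => x == y
  | k'.+1 => nreach e k' x y || [exists z, nreach e k' x z && e z y]
  end.

Definition dist (T : finType) (e : rel T) (x y : T) : nat :=
  find (fun k => nreach e k x y) (iota 0 #|T|).

Definition strongly_resolves (T : finType) (e : rel T) (z x y : T) : bool :=
  (dist e y z == dist e y x + dist e x z) || (dist e x z == dist e x y + dist e y z).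

Definition strong_resolving_set (T : finType) (e : rel T) (S : {set T}) : bool :=
  [forall x, forall y, (x != y) ==> [exists z in S, strongly_resolves e z x y]].

Definition sdim (T : finType) (e : rel T) : nat :=
  \big[minn/#|T|]_(S : {set T} | strong_resolving_set e S) #|S|.

Definition twin_class (T : finType) (e : rel T) (h : T) : {set T} :=
  [set x | cnbh e x == cnbh e h].

Definition gamma_pair (T : finType) (e : rel T) (h h' : T) : bool :=
  [&& h != h', cnbh e h :&: cnbh e h' == set0 & cnbh e h :|: cnbh e h' == [set: T]].

Definition part_of (T : finType) (e : rel T) (h : T) : {set T} :=
  twin_class e h :|: \bigcup_(h' | gamma_pair e h h') twin_class e h'.

Definition Tpartition (T : finType) (e : rel T) : {set {set T}} :=
  [set part_of e h | h in T].

Definition kH (T : finType) (e : rel T) : nat := #|Tpartition e|.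

(* Main.v *)
From HB Require Import structures.
Require Import Defs.
From mathcomp Require Import all_boot zify.
Set Implicit Arguments. Unset Strict Implicit. Unset Printing Implicit Defensive.
HB.instance Definition minn_comlaw := SemiGroup.isComLaw.Build nat minn minnA minnC.

Lemma find_iota_k (p : pred nat) k : forall m N, k < N -> p (m + k) ->
  (forall j, j < k -> ~~ p (m + j)) -> find p (iota m N) = k.
Proof.
elim: k => [|k IH] m [|N] //= HN Hp Hj.
  by rewrite addn0 in Hp; rewrite Hp.
have := Hj 0 isT; rewrite addn0 => /negbTE ->; congr S.
apply: IH => //; first by rewrite addSnnS.
by move=> j Hjk; rewrite addSnnS; apply: Hj.
Qed.

Lemma nreachS (T : finType) (e : rel T) k x y :
  nreach e k.+1 x y = [exists z, nreach e k x z && ((z == y) || e z y)].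
Proof.
rewrite /=; apply/orP/existsP.
  case=> [H|/existsP[z /andP[H1 H2]]]; first by exists y; rewrite H eqxx.
  by exists z; rewrite H1 H2 orbT.
move=> [z /andP[H1 /orP[/eqP<-|H2]]]; first by left.
by right; apply/existsP; exists z; rewrite H1.
Qed.

Lemma dist_refl (T : finType) (e : rel T) x : dist e x x = 0.
Proof.
rewrite /dist; apply: (@find_iota_k _ 0 0 #|T|) => //=.
by apply/card_gt0P; exists x.
Qed.

Lemma bigmin_eq (T : finType) (P : pred {set T}) (F : {set T} -> nat) N m :
  m <= N -> (forall S, P S -> m <= F S) -> (exists2 S, P S & F S <= m) ->
  \big[minn/N]_(S | P S) F S = m.
Proof.
move=> HmN Hlow [S0 HP0 HF0]; apply/eqP; rewrite eqn_leq; apply/andP; split.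
  by rewrite (bigD1 S0) //= (leq_trans (geq_minl _ _) HF0).
apply: (big_ind (fun x => m <= x)) => //.
by move=> x y Hx Hy; rewrite leq_min Hx Hy.
Qed.

Section Prod.
Variables (n : nat) (TG TH : finType) (eG : rel TG) (eH : rel TH)
  (lab : TG -> bool * 'I_n).
Hypothesis n3 : 2 < n.
Hypothesis labS : forall l, exists x, lab x = l.
Hypothesis HeG : eG =2 KnnM_graph lab.
Hypothesis symH : symmetric eH.
Hypothesis irrH : irreflexive eH.

Local Notation V := (TG * TH)%type.
Local Notation e := (modprod eG eH).
Local Notation N h := (cnbh eH h).

Definition lg (l m : bool * 'I_n) : bool := (l.1 == m.1) == (l.2 == m.2).
Definition mt (l m : bool * 'I_n) : bool := (l.1 != m.1) && (l.2 == m.2).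
Definition CC (u v : V) : bool := lg (lab u.1) (lab v.1) == (v.2 \in N u.2).
Definition D3 (u v : V) : bool :=
  ((lab u.1 == lab v.1) && (N v.2 == ~: N u.2)) ||
  (mt (lab u.1) (lab v.1) && (N u.2 == N v.2)).
Definition DD (u v : V) : nat :=
  if u == v then 0 else if CC u v then 1 else if D3 u v then 3 else 2.

Lemma third (i j : 'I_n) : exists k : 'I_n, (k != i) && (k != j).
Proof.
apply/existsP; apply: contraT; rewrite negb_exists => /forallP H.
have : [set: 'I_n] \subset [set i; j].
  by apply/subsetP => k _; have := H k; rewrite !inE negb_and !negbK orbC.
move/subset_leq_card; rewrite cardsT card_ord => Hle.
move: Hle; rewrite cards2; case: (i != j) => Hle.
  by have := leq_trans n3 Hle.
by have := leq_trans n3 Hle.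
Qed.

Lemma lgC l m : lg l m = lg m l.
Proof. by rewrite /lg (eq_sym l.1) (eq_sym l.2). Qed.

Lemma lgE g g' : lg (lab g) (lab g') = (g == g') || eG g g'.
Proof.
rewrite HeG /KnnM_graph; case: eqP => [->|_] /=; first by rewrite /lg !eqxx.
rewrite /lg; case: (lab g) (lab g') => [s i] [t j] /=; rewrite xpair_eqE.
by case: (s == t); case: (i == j).
Qed.

Lemma inN h y : (y \in N h) = (y == h) || eH h y.
Proof. by rewrite inE. Qed.

Lemma NC h y : (y \in N h) = (h \in N y).
Proof. by rewrite !inN eq_sym symH. Qed.

Lemma Nself h : h \in N h.
Proof. by rewrite inN eqxx. Qed.

Lemma closedE u v : (u == v) || e u v = CC u v.
Proof.
case: u v => [g h] [g' h']; rewrite /CC /= lgE inN /=.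
have irrG : forall x, eG x x = false by move=> x; rewrite HeG /KnnM_graph eqxx.
case: (eqVneq (g, h) (g', h')) => [[<- <-]|Hne] /=.
  by rewrite !eqxx.
move: Hne; rewrite xpair_eqE.
case: (eqVneq g g') => [<-|Hg] /=.
  by move=> Hh; rewrite ?eqxx ?irrG /= orbF [h' == h]eq_sym (negbTE Hh).
case: (eqVneq h h') => [<-|Hh] /= _; first by rewrite irrH; case: (eG g g').

by case: (eG g g'); case: (eH h h').
Qed.

Lemma nreach1 u v : nreach e 1 u v = CC u v.
Proof.
rewrite nreachS; apply/existsP/idP => [[z /andP[/eqP <- H]]|H].
  by rewrite -closedE.
by exists u; rewrite /= eqxx closedE.
Qed.

Lemma nreach2 u v : nreach e 2 u v = [exists w, CC u w && CC w v].
Proof.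
rewrite nreachS; apply/existsP/existsP => [[z /andP[H1 H2]]|[z /andP[H1 H2]]].
  by exists z; rewrite -nreach1 H1 -closedE H2.
by exists z; rewrite nreach1 H1 closedE H2.
Qed.

Lemma nreach3 u v :
  nreach e 3 u v = [exists w1, exists w2, CC u w1 && CC w1 w2 && CC w2 v].
Proof.
rewrite nreachS; apply/existsP/existsP => [[z /andP[H1 H2]]|[w1 /existsP[w2 /andP[/andP[H1 H2] H3]]]].
  move: H1; rewrite nreach2 => /existsP[w /andP[H3 H4]].
  by exists w; apply/existsP; exists z; rewrite H3 H4 -closedE H2.
by exists w2; rewrite nreach2 closedE H3 andbT; apply/existsP; exists w1; rewrite H1 H2.
Qed.

Lemma neq_setsP (A B : {set TH}) : A != B -> exists y, (y \in A) != (y \in B).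
Proof.
move=> H; apply/existsP; apply: contraT; rewrite negb_exists => /forallP H'.
move: H; apply: contraR => _; apply/eqP/setP => y.
by have := H' y; rewrite negbK => /eqP.
Qed.

Lemma notC_setsP (A B : {set TH}) : A != ~: B -> exists y, (y \in A) = (y \in B).
Proof.
move=> /neq_setsP [y]; rewrite inE => H; exists y.
by move: H; case: (y \in A); case: (y \in B).
Qed.

Lemma bneq s t : s != t -> t = ~~ s.
Proof. by case: s; case: t. Qed.

Lemma neqF (T : eqType) (a b : T) : a != b -> ((a == b) = false) * ((b == a) = false).
Proof. by move=> H; rewrite (negbTE H) eq_sym (negbTE H). Qed.

Lemma cn_lab (l l' : bool * 'I_n) h h' :
  ~~ (((l == l') && (N h' == ~: N h)) || (mt l l' && (N h == N h'))) ->
  exists m y, (lg l m == (y \in N h)) && (lg m l' == (h' \in N y)).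
Proof.
case: l l' => [s i] [t j]; rewrite xpair_eqE /mt /=.
case: (eqVneq s t) => [<-|Hst]; case: (eqVneq i j) => [<-|Hij] /=.
- rewrite orbF => /notC_setsP [y Hy].
  have [k /andP[Hki _]] := third i i.
  have [F1 F2] := neqF Hki.
  case Hyh: (y \in N h).
    by exists (s, i), y; rewrite /lg /= !eqxx -(NC h' y) Hy Hyh.
  exists (s, k), y; rewrite /lg /= !eqxx ?F1 ?F2 /=.
  by rewrite -(NC h' y) Hy Hyh.
- move=> _; have [k /andP[Hki Hkj]] := third i j.
  have [F1 F2] := neqF Hki; have [F3 F4] := neqF Hkj; have [F5 F6] := neqF Hij.
  case Hh: (h' \in N h).
    exists (~~ s, k), h; rewrite /lg /= Nself.
    by rewrite ?F1 ?F2 ?F3 ?F4 Hh; case: s.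
  exists (s, i), h; rewrite /lg /= Nself !eqxx ?F5 ?F6 Hh.
  by [].
- move=> /neq_setsP [y Hy].
  have [F1 F2] := neqF Hst.
  case Hyh: (y \in N h).
    exists (s, i), y; rewrite /lg /= !eqxx Hyh -(NC h' y) ?F1 ?F2.
    by move: Hy; rewrite Hyh; case: (y \in N h').
  exists (t, i), y; rewrite /lg /= !eqxx Hyh -(NC h' y) ?F1 ?F2.
  by move: Hy; rewrite Hyh; case: (y \in N h').
- move=> _; have [k /andP[Hki Hkj]] := third i j.
  have [F1 F2] := neqF Hki; have [F3 F4] := neqF Hkj; have [F5 F6] := neqF Hij.
  have [F7 F8] := neqF Hst.
  case Hh: (h' \in N h).
    by exists (s, i), h; rewrite /lg /= Nself ?F5 ?F6 ?F7 ?F8 Hh !eqxx.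
  exists (~~ s, k), h; rewrite /lg /= Nself Hh (bneq Hst).
  by rewrite ?F1 ?F2 ?F3 ?F4; case: s {Hst F7 F8}.
Qed.
Lemma path3_lab (l l' : bool * 'I_n) h h' :
  ((l == l') && (N h' == ~: N h)) || (mt l l' && (N h == N h')) ->
  exists m1 m2 y1 y2, [&& lg l m1 == (y1 \in N h), lg m1 m2 == (y2 \in N y1)
                         & lg m2 l' == (h' \in N y2)].
Proof.
case: l l' => [s i] [t j]; rewrite /mt /=.
have [k /andP[Hki _]] := third i i.
have [k' /andP[Hk'i Hk'k]] := third i k.
have [F1 F2] := neqF Hki; have [F3 F4] := neqF Hk'i; have [F5 F6] := neqF Hk'k.
case/orP => [/andP[/eqP[<- <-] /eqP HN]|/andP[/andP[Hst /eqP <-] /eqP HN]].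
  exists (~~ s, k), (~~ s, k'), h, h'; rewrite /lg /= ?F1 ?F2 ?F3 ?F4 ?F5 ?F6.
  have Hh' : (h' \in N h) = false.
    by have := Nself h'; rewrite HN inE; case: (h' \in N h).
  rewrite (Nself h) Hh' (Nself h') /=.
  by case: s.
exists (~~ s, k), (s, k'), h, h; rewrite /lg /= ?F1 ?F2 ?F3 ?F4 ?F5 ?F6.
rewrite Nself HN Nself (bneq Hst) /=.
by case: s {Hst}.
Qed.

Lemma nocn_lab (l l' : bool * 'I_n) h h' :
  ((l == l') && (N h' == ~: N h)) || (mt l l' && (N h == N h')) ->
  (forall m y, ~~ ((lg l m == (y \in N h)) && (lg m l' == (h' \in N y))))
  /\ ~~ (lg l l' == (h' \in N h)).
Proof.
case: l l' => [s i] [t j]; rewrite /mt /=.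
case/orP => [/andP[/eqP[<- <-] /eqP HN]|/andP[/andP[Hst /eqP <-] /eqP HN]].
  split.
    move=> m y; rewrite lgC -(NC h' y) HN in_setC.
    by case: (lg m (s, i)); case: (y \in N h).
  have Hh' : (h' \in N h) = false.
    by have := Nself h'; rewrite HN in_setC; case: (h' \in N h).
  by rewrite /lg !eqxx Hh'.
split.
  move=> [u k] y; rewrite -(NC h' y) -HN /lg /= (bneq Hst).
  rewrite [k == i]eq_sym.
  by case: s {Hst}; case: u; case: (i == k); case: (y \in N h).
by rewrite /lg /= (negbTE Hst) eqxx HN Nself.
Qed.

Lemma CC_refl u : CC u u.
Proof. by rewrite /CC /lg !eqxx Nself. Qed.

Lemma cardV (u : V) : 3 < #|TG| * #|TH|.
Proof.
have HG : 5 < #|TG|.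
  have -> : #|TG| = #|[set: TG]| by rewrite cardsT.
  apply: leq_trans (leq_imset_card lab _).
  have -> : [set lab x | x in [set: TG]] = [set: bool * 'I_n].
    apply/setP => l; rewrite inE; have [x <-] := labS l.
    by apply/imsetP; exists x; rewrite ?inE.
  by rewrite cardsT card_prod card_bool card_ord; rewrite mul2n -addnn; exact: (leq_add n3 n3).
apply: (@leq_trans #|TG|); first exact: leq_trans _ HG.
by apply: leq_pmulr; apply/card_gt0P; exists u.2.
Qed.

Lemma distE u v : dist e u v = DD u v.
Proof.
rewrite /dist /DD card_prod.
have HV := cardV u.
have H0 : ~~ nreach e 0 u v = (u != v) by [].
case: eqVneq => [<-|Huv].
  apply: (@find_iota_k _ 0 0); first by rewrite (ltn_trans _ HV).
    by rewrite /= eqxx.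
  by [].
case HC: (CC u v).
  apply: (@find_iota_k _ 1 0); first by rewrite (ltn_trans _ HV).
    by rewrite add0n nreach1.
  by case=> // _; rewrite add0n H0 Huv.
case HD: (D3 u v).
  apply: (@find_iota_k _ 3 0) => //.
  - rewrite add0n nreach3; case: u v {Huv HC H0} HD => [g h] [g' h'] /= HD.
    have [m1 [m2 [y1 [y2 /and3P[H1 H2 H3]]]]] := path3_lab HD.
    have [x1 Hx1] := labS m1; have [x2 Hx2] := labS m2.
    apply/existsP; exists (x1, y1); apply/existsP; exists (x2, y2).
    by rewrite /CC /= Hx1 Hx2 H1 H2 H3.
  - case=> [|[|[|j]]] // _; rewrite add0n ?H0 ?Huv //.
    + by rewrite nreach1 HC.
    + rewrite nreach2; apply/negP => /existsP [[x y] /andP[H1 H2]].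
      move: HD H1 H2; case: u v {Huv HC H0} => [g h] [g' h'] HD H1 H2.
      have [Hn _] := nocn_lab HD.
      by have := Hn (lab x) y; rewrite /CC /= in H1 H2; rewrite H1 H2.
apply: (@find_iota_k _ 2 0); first by rewrite (ltn_trans _ HV).
- rewrite add0n nreach2; case: u v {Huv HC H0} HD => [g h] [g' h'] /= /negbT HD.
  have [m [y /andP[H1 H2]]] := cn_lab HD.
  have [x Hx] := labS m.
  by apply/existsP; exists (x, y); rewrite /CC /= Hx H1 H2.
- case=> [|[|j]] // _; rewrite add0n ?H0 ?Huv //.
  by rewrite nreach1 HC.
Qed.
Lemma CCC u v : CC u v = CC v u.
Proof. by rewrite /CC lgC NC. Qed.

Lemma gamC h h' : (N h' == ~: N h) = (N h == ~: N h').
Proof.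
apply/eqP/eqP => [->|->]; by rewrite setCK.
Qed.

Lemma mtC l m : mt l m = mt m l.
Proof. by rewrite /mt eq_sym (eq_sym l.2). Qed.

Lemma D3C u v : D3 u v = D3 v u.
Proof.
rewrite /D3 gamC mtC (eq_sym (lab u.1)); congr (_ || (_ && _)); exact: eq_sym.
Qed.

Lemma DDC u v : DD u v = DD v u.
Proof. by rewrite /DD eq_sym CCC D3C. Qed.

Lemma D3_CC u v : D3 u v -> ~~ CC u v.
Proof.
case: u v => [g h] [g' h'] /= H; have [_ Hc] := nocn_lab H.
by rewrite /CC.
Qed.

Lemma DD3 u z : D3 u z -> DD u z = 3.
Proof.
move=> H; rewrite /DD (negbTE (D3_CC H)) H.
case: eqVneq => // E; move: (D3_CC H); rewrite E CC_refl //.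
Qed.

Lemma DD1 u z : u != z -> CC u z -> DD u z = 1.
Proof. by move=> H1 H2; rewrite /DD (negbTE H1) H2. Qed.

Lemma DD2 u z : u != z -> ~~ CC u z -> ~~ D3 u z -> DD u z = 2.
Proof. by move=> H1 H2 H3; rewrite /DD (negbTE H1) (negbTE H2) (negbTE H3). Qed.

Lemma DD_le3 u v : DD u v <= 3.
Proof. by rewrite /DD; case: (u == v); case: (CC u v); case: (D3 u v). Qed.

Lemma DD_pos u v : u != v -> 0 < DD u v.
Proof. by rewrite /DD => /negbTE ->; case: (CC u v); case: (D3 u v). Qed.
Lemma twin_DD u v z : lab u.1 = lab v.1 -> N u.2 = N v.2 -> z != u -> z != v ->
  DD u z = DD v z.
Proof.
move=> Hl Hn Hzu Hzv; rewrite /DD (eq_sym u) (eq_sym v) (negbTE Hzu) (negbTE Hzv).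
by rewrite /CC /D3 Hl Hn.
Qed.

Lemma gam_DD u v z : mt (lab u.1) (lab v.1) -> N v.2 = ~: N u.2 -> z != u -> z != v ->
  DD u z = DD v z.
Proof.
move=> Hm Hn Hzu Hzv; rewrite /DD (eq_sym u) (eq_sym v) (negbTE Hzu) (negbTE Hzv).
rewrite /CC /D3 Hn in_setC setCK.
move: Hm; case: (lab u.1) (lab v.1) (lab z.1) => [s i] [t j] [w k].
rewrite /mt /= => /andP[Hst /eqP <-]; rewrite (bneq Hst).
rewrite (eq_sym (~: N u.2)) (eq_sym (N u.2) (N z.2)).
move: (N z.2 == N u.2) (N z.2 == ~: N u.2) => b1 b2.
rewrite /lg !xpair_eqE /=.
by case: s {Hst}; case: w; case: (i == k); case: (z.2 \in N u.2); case: b1; case: b2.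
Qed.

Lemma no_res u v z : u != v -> (lab u.1).2 == (lab v.1).2 ->
  (N u.2 == N v.2) || (N v.2 == ~: N u.2) -> z != u -> z != v ->
  ~~ strongly_resolves e z u v.
Proof.
move=> Huv Hi Hp Hzu Hzv; rewrite /strongly_resolves !distE.
have Huz : u != z by rewrite eq_sym.
have Hvz : v != z by rewrite eq_sym.
have P1 := DD_pos Huz; have P2 := DD_pos Hvz.
have L1 := DD_le3 u z; have L2 := DD_le3 v z.
case HD: (D3 u v).
  rewrite (DDC v u) (DD3 HD).
  by apply/negP => /orP[/eqP E|/eqP E]; lia.
have Hl : (lab u.1 == lab v.1) || mt (lab u.1) (lab v.1).
  move: Hi; case: (lab u.1) (lab v.1) => [s i] [t j] /= /eqP <-.
  by rewrite /mt xpair_eqE /= eqxx andbT orbC; case: eqVneq.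
have [Eq HC] : DD u z = DD v z /\ CC u v.
  move: HD; rewrite /D3.
  case/orP: Hl => [/eqP El|Em]; case/orP: Hp => [/eqP En|/eqP En].
  - by split; [exact: twin_DD | rewrite /CC El En /lg !eqxx Nself].
  - by rewrite El eqxx En eqxx.
  - by rewrite Em En eqxx orbT.
  - split; first exact: gam_DD.
    rewrite /CC; move: Em; rewrite /mt /lg => /andP[/negbTE -> /eqP ->].
    by rewrite eqxx /=; have := Nself v.2; rewrite En in_setC; case: (v.2 \in N u.2).
rewrite (DDC v u) (DD1 Huv HC) Eq.
by apply/negP => /orP[/eqP E|/eqP E]; lia.
Qed.
Lemma neq_lab (u z : V) : lab u.1 != lab z.1 -> u != z.
Proof. by apply: contra => /eqP ->. Qed.

Lemma yes_res u v : u != v -> (lab u.1).1 = false -> (lab v.1).1 = false ->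
  ((lab u.1).2 == (lab v.1).2 -> (N u.2 != N v.2) && (N v.2 != ~: N u.2)) ->
  exists z : V, (lab z.1).1 && strongly_resolves e z u v.
Proof.
case: u v => [g h] [g' h'] /= Huv.
case Hl: (lab g) => [s i] /= Hs; subst s.
case Hl': (lab g') => [s' j] /= Hs'; subst s' => Hnt.
rewrite /strongly_resolves.
case: (eqVneq i j) => [Eij|Nij].
  subst j; have /andP[Hnt1 Hnt2] := Hnt (eqxx i).
  have [k /andP[Hki _]] := third i i; have [F1 F2] := neqF Hki.
  have Euv : CC (g, h) (g', h') = (h' \in N h) by rewrite /CC /= Hl Hl' /lg !eqxx.
  case Hh: (h' \in N h).
    have [y Hy] := neq_setsP Hnt1.
    have [x Hx] := labS (true, k).
    have Nu : (g, h) != (x, y) by apply: neq_lab; rewrite /= Hl Hx.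
    have Nv : (g', h') != (x, y) by apply: neq_lab; rewrite /= Hl' Hx.
    have D3v : ~~ D3 (g', h') (x, y) by rewrite /D3 /mt /= Hl' Hx /= F2.
    have D3u : ~~ D3 (g, h) (x, y) by rewrite /D3 /mt /= Hl Hx /= F2.
    have Duv : DD (g, h) (g', h') = 1 by rewrite DD1 // Euv.
    exists (x, y); rewrite Hx /= !distE (DDC (g', h') (g, h)) Duv.
    case Hyh: (y \in N h).
      have Hyh' : (y \in N h') = false by move: Hy; rewrite Hyh; case: (y \in N h').
      rewrite (@DD1 (g, h) (x, y)) //; last by rewrite /CC /= Hl Hx /lg /= F2 Hyh.
      by rewrite (@DD2 (g', h') (x, y)) // /CC /= Hl' Hx /lg /= F2 Hyh'.
    have Hyh' : (y \in N h') = true by move: Hy; rewrite Hyh; case: (y \in N h').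
    rewrite (@DD1 (g', h') (x, y)) //; last by rewrite /CC /= Hl' Hx /lg /= F2 Hyh'.
    by rewrite (@DD2 (g, h) (x, y)) ?orbT // /CC /= Hl Hx /lg /= F2 Hyh.
  have [x Hx] := labS (true, i).
  have Nu : (g, h) != (x, h') by apply: neq_lab; rewrite /= Hl Hx.
  have Duv : DD (g, h) (g', h') = 2.
    by rewrite DD2 // ?Euv ?Hh // /D3 /mt /= Hl Hl' /= eqxx orbF.
  exists (x, h'); rewrite Hx /= !distE (DDC (g', h') (g, h)) Duv.
  rewrite (@DD1 (g, h) (x, h')) //; last by rewrite /CC /= Hl Hx /lg /= eqxx Hh.
  by rewrite DD3 // /D3 /mt /= Hl' Hx /= !eqxx.
have [k /andP[Hki Hkj]] := third i j.
have [F1 F2] := neqF Hki; have [F3 F4] := neqF Hkj; have [F5 F6] := neqF Nij.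
have Euv : CC (g, h) (g', h') = ~~ (h' \in N h) by rewrite /CC /= Hl Hl' /lg /= F5; case: (h' \in N h).
case Hh: (h' \in N h).
  have [x Hx] := labS (true, j).
  have Nu : (g, h) != (x, h') by apply: neq_lab; rewrite /= Hl Hx.
  have Duv : DD (g, h) (g', h') = 2.
    by rewrite DD2 // ?Euv ?Hh // /D3 /mt /= Hl Hl' /= xpair_eqE /= F5.
  exists (x, h'); rewrite Hx /= !distE (DDC (g', h') (g, h)) Duv.
  rewrite (@DD1 (g, h) (x, h')) //; last by rewrite /CC /= Hl Hx /lg /= F5 Hh.
  by rewrite DD3 // /D3 /mt /= Hl' Hx /= !eqxx.
have [x Hx] := labS (true, k).
have Nu : (g, h) != (x, h) by apply: neq_lab; rewrite /= Hl Hx.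
have Nv : (g', h') != (x, h) by apply: neq_lab; rewrite /= Hl' Hx.
have Duv : DD (g, h) (g', h') = 1 by rewrite DD1 // Euv Hh.
exists (x, h); rewrite Hx /= !distE (DDC (g', h') (g, h)) Duv.
rewrite (@DD1 (g, h) (x, h)) //; last by rewrite /CC /= Hl Hx /lg /= F2 Nself.
rewrite (@DD2 (g', h') (x, h)) //.
  by rewrite /CC /= Hl' Hx /lg /= F4 NC Hh.
by rewrite /D3 /mt /= Hl' Hx /= F4.
Qed.
Lemma gammaE h h' : gamma_pair eH h h' = (N h' == ~: N h).
Proof.
apply/idP/eqP => [/and3P[_ /eqP I /eqP U]|E].
  apply/setP => y; rewrite in_setC.
  have I' : (y \in N h :&: N h') = false by rewrite I inE.
  have U' : (y \in N h :|: N h') by rewrite U inE.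
  move: I' U'; rewrite in_setI in_setU.
  by case: (y \in N h); case: (y \in N h').
rewrite /gamma_pair E setICr setUCr !eqxx !andbT.
apply/eqP => Ehh; have := Nself h'; rewrite E -Ehh in_setC Nself.
by [].
Qed.

Lemma partE h x : (x \in part_of eH h) = (N h == N x) || (N x == ~: N h).
Proof.
rewrite /part_of in_setU /twin_class inE (eq_sym (N x)); congr (_ || _).
apply/bigcupP/idP => [[h' Hg]|Hx].
  by rewrite gammaE in Hg; rewrite inE => /eqP ->.
by exists x; rewrite ?gammaE // inE.
Qed.

Lemma part_self h : h \in part_of eH h.
Proof. by rewrite partE eqxx. Qed.

Lemma part_trans h x : x \in part_of eH h -> part_of eH x = part_of eH h.
Proof.
rewrite partE => H; apply/setP => y; rewrite !partE.
case/orP: H => /eqP H; first by rewrite -H.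
rewrite H setCK (eq_sym (~: N h)) orbC; congr (_ || _); exact: eq_sym.
Qed.

Lemma Tpart : partition (Tpartition eH) [set: TH].
Proof.
apply/and3P; split.
- apply/eqP/setP => x; rewrite inE; apply/bigcupP.
  by exists (part_of eH x); [apply: imset_f | apply: part_self].
- apply/trivIsetP => A B /imsetP[h _ ->] /imsetP[h' _ ->] Hne.
  rewrite -setI_eq0; apply: contraR Hne => /set0Pn [x /setIP[H1 H2]].
  by rewrite -(part_trans H1) -(part_trans H2).
- apply/imsetP => [[h _ E]]; have := part_self h; rewrite -E inE.
  by [].
Qed.

Lemma upper S : strong_resolving_set e S -> #|~: S| <= n * #|Tpartition eH|.
Proof.
move=> HS; pose f := fun u : V => ((lab u.1).2, part_of eH u.2).
have inj : {in ~: S &, injective f}.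
  move=> u v Hu Hv [Hi Hp]; apply/eqP; apply: contraT => Huv.
  move/forallP: HS => /(_ u) /forallP /(_ v); rewrite Huv /= => /existsP [z /andP[Hz Hr]].
  rewrite inE in Hu; rewrite inE in Hv.
  have Hzu : z != u by apply: contraNneq Hu => <-.
  have Hzv : z != v by apply: contraNneq Hv => <-.
  have Hpart : v.2 \in part_of eH u.2 by rewrite Hp part_self.
  rewrite partE in Hpart.
  by have := no_res Huv (introT eqP Hi) Hpart Hzu Hzv; rewrite Hr.
rewrite -(card_in_imset inj).
have sub : [set f x | x in ~: S] \subset setX [set: 'I_n] (Tpartition eH).
  apply/subsetP => _ /imsetP[u _ ->]; rewrite in_setX in_setT /=.
  by apply: imset_f.
by apply: (leq_trans (subset_leq_card sub)); rewrite cardsX cardsT card_ord.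
Qed.

Lemma lower : exists2 S, strong_resolving_set e S &
  #|S| <= #|TG| * #|TH| - n * #|Tpartition eH|.
Proof.
case: (pickP (fun _ : TH => true)) => [h0 _|H0]; last first.
  have CH : #|TH| = 0 by apply: eq_card0 => x; have := H0 x.
  have CP : #|Tpartition eH| = 0.
    by apply/eqP; rewrite -leqn0 -CH; apply: leq_imset_card.
  exists [set: V].
    apply/forallP => x; apply/forallP => y; apply/implyP => _.
    by apply/existsP; exists x; rewrite in_setT /strongly_resolves dist_refl addn0 eqxx.
  by rewrite cardsT CP card_prod CH !muln0.
have gsP : forall i, exists x, lab x == (false, i).
  by move=> i; have [x Hx] := labS (false, i); exists x; rewrite Hx.
pose gs i := xchoose (gsP i).
have Hgs : forall i, lab (gs i) = (false, i) by move=> i; apply/eqP; exact: (xchooseP (gsP i)).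
pose rep (P : {set TH}) := odflt h0 [pick x in P].
have repP : forall P, P \in Tpartition eH -> rep P \in P.
  move=> P /imsetP[h _ ->]; rewrite /rep; case: pickP => [x Hx|Hn] //.
  by have := Hn h; rewrite part_self.
have reppart : forall P, P \in Tpartition eH -> part_of eH (rep P) = P.
  move=> P HP; have := repP P HP; case/imsetP: HP => h _ -> Hr.
  exact: part_trans.
pose I := setX (gs @: [set: 'I_n]) (rep @: Tpartition eH).
have cardI : #|I| = n * #|Tpartition eH|.
  rewrite cardsX card_imset; last first.
    by move=> i j Eij; have := Hgs i; rewrite Eij Hgs => -[].
  rewrite cardsT card_ord card_in_imset //.
  by move=> P P' HP HP' E; rewrite -(reppart P HP) -(reppart P' HP') E.
have HIl : forall u, u \in I -> exists2 i, u.1 = gs i & exists2 P, P \in Tpartition eH & u.2 = rep P.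
  case=> a b; rewrite in_setX => /andP[/imsetP[i _ ->] /imsetP[P HP ->]].
  by exists i => //; exists P.
exists (~: I); last first.
  have := cardsC I; rewrite cardI card_prod => <-.
  by rewrite addKn.
apply/forallP => x; apply/forallP => y; apply/implyP => Hxy.
case Hx: (x \in ~: I).
  by apply/existsP; exists x; rewrite Hx /strongly_resolves dist_refl addn0 eqxx.
case Hy: (y \in ~: I).
  by apply/existsP; exists y; rewrite Hy /strongly_resolves dist_refl addn0 eqxx orbT.
move: Hx Hy; rewrite !in_setC => /negbFE Hx /negbFE Hy.
have [i Ex [P HP Ex2]] := HIl x Hx; have [j Ey [P' HP' Ey2]] := HIl y Hy.
have [z /andP[Hz Hr]] : exists z : V, (lab z.1).1 && strongly_resolves e z x y.
  apply: yes_res => //; rewrite ?Ex ?Ey ?Hgs //=.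
  move=> /eqP Eij; subst j.
  have E2 : x.2 != y.2.
    by apply: contraNneq Hxy => E2; case: x y Ex Ey E2 {Hx Hy Ex2 Ey2} => [a b] [c d] /= -> -> ->.
  rewrite -negb_or; apply/negP => Hc.
  have Hpart : y.2 \in part_of eH x.2 by rewrite partE.
  move: E2; rewrite Ex2 Ey2; apply/negP; rewrite negbK.
  by rewrite Ex2 Ey2 in Hpart; have := part_trans Hpart; rewrite !reppart // => ->.
apply/existsP; exists z; rewrite Hr andbT in_setC.
apply/negP => /HIl [k Ez _]; move: Hz; rewrite Ez Hgs.
by [].
Qed.

Lemma sdimE : sdim e = #|TG| * #|TH| - n * #|Tpartition eH|.
Proof.
apply: bigmin_eq; first by rewrite card_prod leq_subr.
  move=> S HS; have := upper HS; have := cardsC S; rewrite card_prod.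
  by lia.
exact: lower.
Qed.
End Prod.

Lemma cardTG (n : nat) (q r : 'I_n -> nat) (TG : finType) (lab : TG -> bool * 'I_n) :
  (forall i, #|[set x | lab x == (false, i)]| = q i) ->
  (forall i, #|[set x | lab x == (true, i)]| = r i) ->
  #|TG| = \sum_(i < n) (q i + r i).
Proof.
move=> Hq Hr.
have -> : \sum_(i < n) (q i + r i) =
          \sum_(i < n) \sum_(b : bool) #|[set x | lab x == (b, i)]|.
  by apply: eq_bigr => i _; rewrite big_bool /= Hq Hr addnC.
rewrite exchange_big pair_big /=.
have -> : #|TG| = \sum_(x : TG) 1 by rewrite sum1_card.
rewrite (partition_big lab xpredT) //=.
apply: eq_bigr => [[b i]] _ /=.
rewrite sum1dep_card; apply: eq_card => x; rewrite !inE.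
by [].
Qed.

Theorem mainTheorem11 (n : nat) (q r : 'I_n -> nat)
  (TG : finType) (eG : rel TG) (TH : finType) (eH : rel TH) :
  3 <= n ->
  (forall i, 0 < q i) -> (forall i, 0 < r i) ->
  is_KnnM q r eG ->
  simple_graph eH ->
  (forall h, ~~ universal eH h) ->
  sdim (modprod eG eH) =
    \sum_(i < n) ((q i + r i) * \sum_(P in Tpartition eH) #|P|) - n * kH eH.
Proof.
move=> n3 Hq Hr [lab [Hcq Hcr HeG]] [symH irrH] _.
have labS : forall l, exists x, lab x = l.
  case=> [[] i].
    by have := Hr i; rewrite -Hcr => /card_gt0P [x]; rewrite inE => /eqP; exists x.
  by have := Hq i; rewrite -Hcq => /card_gt0P [x]; rewrite inE => /eqP; exists x.

rewrite (sdimE n3 labS HeG symH irrH).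
rewrite -(card_partition (Tpart eH)) cardsT -big_distrl /=.
by rewrite -(cardTG Hcq Hcr).
Qed.
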